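(* Let $S$ be an $n$-vertex star. For any $s\ge1$, any straight-line drawing of $S$ with spanning ratio at most $s$ has edge-length ratio in $2^{\Omega(n/s^2)}$.
   Context: A star is a tree with one vertex adjacent to all others. A straight-line drawing maps vertices to distinct points and edges to straight-line segments. In a straight-line drawing $\Gamma$, $\pi_\Gamma(u,v)$ is the minimum total Euclidean length of a path between $u$ and $v$, $\|uv\|_\Gamma$ is their Euclidean distance, and the spanning ratio is $\max_{u\neq v}\pi_\Gamma(u,v)/\|uv\|_\Gamma$. The edge-length ratio is the ratio between the lengths of the longest and shortest edges. The $\Omega$ notation hides an absolute constant. *)

(* Defs.v *)
From Stdlib Require Import Reals List Arith Lra Bool.
Import ListNotations.
Open Scope bool_scope.
Open Scope R_scope.

Definition point := (R * R)%type.
Definition dist (p q : point) : R :=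
  sqrt ((fst p - fst q) ^ 2 + (snd p - snd q) ^ 2).

(* A graph on vertex set {0,...,n-1} given by a (symmetric) boolean adjacency.
   The n-vertex star: center 0, leaves 1..n-1. *)
Definition star_adj (u v : nat) : bool :=
  ((u =? 0)%nat && negb (v =? 0)%nat) || ((v =? 0)%nat && negb (u =? 0)%nat).

(* A straight-line drawing: vertices mapped to distinct points
   (edges are the straight segments between the images of their endpoints). *)
Definition is_drawing (n : nat) (G : nat -> point) : Prop :=
  forall u v, (u < n)%nat -> (v < n)%nat -> u <> v -> G u <> G v.

Fixpoint walk_len (G : nat -> point) (x : nat) (l : list nat) : R :=
  match l with
  | [] => 0
  | y :: l' => dist (G x) (G y) + walk_len G y l'
  end.

Fixpoint is_walk (adj : nat -> nat -> bool) (x : nat) (l : list nat) : Prop :=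
  match l with
  | [] => True
  | y :: l' => adj x y = true /\ is_walk adj y l'
  end.

Definition is_path (n : nat) (adj : nat -> nat -> bool) (u v : nat) (l : list nat) : Prop :=
  is_walk adj u l /\ last (u :: l) u = v /\ NoDup (u :: l) /\
  Forall (fun w => (w < n)%nat) (u :: l).

(* Spanning ratio at most s: for all u <> v, pi_G(u,v) <= s * ||uv||, where
   pi_G(u,v) is the minimum length of a path (a minimum over finitely many
   simple paths, so "min <= X" iff "some path has length <= X"). *)
Definition spanning_ratio_le (n : nat) (adj : nat -> nat -> bool)
  (G : nat -> point) (s : R) : Prop :=
  forall u v, (u < n)%nat -> (v < n)%nat -> u <> v ->
    exists l, is_path n adj u v l /\ walk_len G u l <= s * dist (G u) (G v).

Definition edges (n : nat) (adj : nat -> nat -> bool) : list (nat * nat) :=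
  filter (fun p => adj (fst p) (snd p) && (fst p <? snd p)%nat)
         (list_prod (seq 0 n) (seq 0 n)).

Definition edge_lengths (n : nat) (adj : nat -> nat -> bool) (G : nat -> point) : list R :=
  map (fun p => dist (G (fst p)) (G (snd p))) (edges n adj).

Definition list_max (l : list R) : R := fold_right Rmax 0 l.
Definition list_min (l : list R) : R :=
  match l with [] => 0 | x :: r => fold_right Rmin x r end.

Definition edge_length_ratio (n : nat) (adj : nat -> nat -> bool) (G : nat -> point) : R :=
  list_max (edge_lengths n adj G) / list_min (edge_lengths n adj G).

(* Main.v *)
Require Import Defs.
From Stdlib Require Import Reals.
From Stdlib Require Import Rgeom List Arith Lia Lra ZArith.
Require Import Defs.
Import ListNotations.
Open Scope R_scope.

Lemma dist_triangle p q r : dist p q <= dist p r + dist r q.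
Proof.
  destruct p as [a b], q as [c d], r as [e f]. unfold dist; simpl.
  pose proof (triangle a b c d e f) as H. unfold dist_euc, Rsqr in H.
  rewrite !Rmult_1_r. exact H.
Qed.

Lemma dist_nonneg p q : 0 <= dist p q.
Proof. unfold dist. apply sqrt_pos. Qed.

Lemma dist_sym p q : dist p q = dist q p.
Proof. unfold dist. f_equal. ring. Qed.

Lemma dist_pos p q : p <> q -> 0 < dist p q.
Proof.
  intro H. destruct (dist_nonneg p q) as [h|h]; auto.
  exfalso. apply H. unfold dist in h. symmetry in h.
  apply sqrt_eq_0 in h; [|apply Rplus_le_le_0_compat; apply pow2_ge_0].
  destruct p as [a b], q as [c d]; simpl in *.
  pose proof (pow2_ge_0 (a-c)). pose proof (pow2_ge_0 (b-d)).
  assert (E1 : (a-c)^2 = 0) by lra. assert (E2 : (b-d)^2 = 0) by lra.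
  destruct (Req_dec (a-c) 0) as [F1|F1]; [|exfalso; apply (pow_nonzero _ 2) in F1; auto].
  destruct (Req_dec (b-d) 0) as [F2|F2]; [|exfalso; apply (pow_nonzero _ 2) in F2; auto].
  assert (a = c) by lra. assert (b = d) by lra. subst; reflexivity.
Qed.

Lemma fst_le_dist p q : Rabs (fst p - fst q) <= dist p q.
Proof.
  unfold dist. rewrite <- sqrt_Rsqr_abs. apply sqrt_le_1.
  - apply Rle_0_sqr.
  - apply Rplus_le_le_0_compat; apply pow2_ge_0.
  - rewrite Rsqr_pow2. pose proof (pow2_ge_0 (fst p - fst q)). pose proof (pow2_ge_0 (snd p - snd q)). lra.
Qed.

Lemma snd_le_dist p q : Rabs (snd p - snd q) <= dist p q.
Proof.
  unfold dist. rewrite <- sqrt_Rsqr_abs. apply sqrt_le_1.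
  - apply Rle_0_sqr.
  - apply Rplus_le_le_0_compat; apply pow2_ge_0.
  - rewrite Rsqr_pow2. pose proof (pow2_ge_0 (fst p - fst q)). pose proof (pow2_ge_0 (snd p - snd q)). lra.
Qed.

Lemma dist_lt2 p q h : 0 < h -> Rabs (fst p - fst q) < h -> Rabs (snd p - snd q) < h ->
  dist p q < 2 * h.
Proof.
  intros Hh H1 H2. unfold dist.
  replace (2*h) with (sqrt ((2*h)²)) by (rewrite sqrt_Rsqr; lra).
  apply sqrt_lt_1; [apply Rplus_le_le_0_compat; apply pow2_ge_0| apply Rle_0_sqr|].
  unfold Rsqr.
  pose proof (Rabs_pos (fst p - fst q)). pose proof (Rabs_pos (snd p - snd q)).
  assert ((fst p - fst q)^2 = Rabs (fst p - fst q) * Rabs (fst p - fst q)).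
  { rewrite <- Rabs_mult, Rabs_pos_eq; [ring| apply Rle_0_sqr]. }
  assert ((snd p - snd q)^2 = Rabs (snd p - snd q) * Rabs (snd p - snd q)).
  { rewrite <- Rabs_mult, Rabs_pos_eq; [ring| apply Rle_0_sqr]. }
  nra.
Qed.

Lemma walk_len_ge G l : forall x d, dist (G x) (G (last (x :: l) d)) <= walk_len G x l.
Proof.
  induction l as [|y l IH]; intros x d; simpl.
  - unfold dist. replace ((fst (G x) - fst (G x)) ^ 2 + (snd (G x) - snd (G x)) ^ 2) with 0 by ring.
    rewrite sqrt_0. lra.
  - specialize (IH y d). simpl in IH.
    pose proof (dist_triangle (G x) (G (match l with [] => y | _ :: _ => last l d end)) (G y)).
    lra.
Qed.

Lemma leaf_span n G s u v : spanning_ratio_le n star_adj G s ->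
  (1 <= u < n)%nat -> (1 <= v < n)%nat -> u <> v ->
  dist (G 0%nat) (G u) + dist (G 0%nat) (G v) <= s * dist (G u) (G v).
Proof.
  intros Hs Hu Hv Huv. destruct (Hs u v ltac:(lia) ltac:(lia) Huv) as [l [[Hw [Hl _]] Hlen]].
  destruct l as [|y l'].
  - simpl in Hl. congruence.
  - destruct Hw as [Hy _].
    assert (y = 0%nat).
    { unfold star_adj in Hy. destruct (Nat.eqb_spec u 0); destruct (Nat.eqb_spec y 0); simpl in Hy;
      try lia; discriminate. }
    subst y. simpl in Hlen.
    pose proof (walk_len_ge G l' 0%nat u) as H.
    change (last (u :: 0%nat :: l') u) with (last (0%nat :: l') u) in Hl.
    rewrite Hl in H. rewrite dist_sym. lra.
Qed.

Lemma edges_in n e : In e (edges n star_adj) -> fst e = 0%nat /\ (1 <= snd e < n)%nat.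
Proof.
  unfold edges. rewrite filter_In. destruct e as [a b]. rewrite in_prod_iff, !in_seq. simpl.
  intros [[_ Hb] H]. apply andb_prop in H. destruct H as [H1 H2].
  apply Nat.ltb_lt in H2. unfold star_adj in H1.
  destruct (Nat.eqb_spec a 0); destruct (Nat.eqb_spec b 0); simpl in H1; try discriminate; lia.
Qed.

Lemma edges_leaf n v : (1 <= v < n)%nat -> In (0%nat, v) (edges n star_adj).
Proof.
  intro H. unfold edges. rewrite filter_In, in_prod_iff, !in_seq. simpl.
  split; [lia|]. unfold star_adj. destruct (Nat.eqb_spec v 0); [lia|]. simpl.
  apply Nat.ltb_lt. lia.
Qed.

Lemma list_max_ge l x : In x l -> x <= list_max l.
Proof.
  induction l as [|a l IH]; simpl; [tauto|]. intros [<-|H].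
  - apply Rmax_l.
  - eapply Rle_trans; [apply IH; auto| apply Rmax_r].
Qed.

Lemma fold_min_le x r y : In y (x :: r) -> fold_right Rmin x r <= y.
Proof.
  induction r as [|a r IH]; simpl.
  - intros [<-|[]]; lra.
  - intros [<-|[<-|H]].
    + eapply Rle_trans; [apply Rmin_r| apply IH; simpl; auto].
    + apply Rmin_l.
    + eapply Rle_trans; [apply Rmin_r| apply IH; simpl; auto].
Qed.

Lemma fold_min_in x r : In (fold_right Rmin x r) (x :: r).
Proof.
  induction r as [|a r IH]; simpl; auto.
  apply Rmin_case; simpl; auto. simpl in IH. tauto.
Qed.

Lemma list_min_le l x : In x l -> list_min l <= x.
Proof. destruct l; simpl; [tauto|]. apply fold_min_le. Qed.

Lemma list_min_in l : l <> [] -> In (list_min l) l.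
Proof. destruct l; [tauto|]. intros _. apply fold_min_in. Qed.

Lemma int_part_close a b h : 0 < h -> Int_part (a / h) = Int_part (b / h) -> Rabs (a - b) < h.
Proof.
  intros Hh E.
  destruct (base_Int_part (a/h)) as [A1 A2]. destruct (base_Int_part (b/h)) as [B1 B2].
  rewrite E in A1, A2.
  assert (a - b = (a/h - b/h) * h) as -> by (field; lra).
  rewrite Rabs_mult, (Rabs_pos_eq h) by lra.
  assert (Rabs (a/h - b/h) < 1) by (apply Rabs_def1; lra).
  nra.
Qed.

Lemma exp_le x y : x <= y -> exp x <= exp y.
Proof. intros [H|H]; [left; apply exp_increasing; auto| subst; lra]. Qed.

Lemma ln_le' x y : 0 < x -> x <= y -> ln x <= ln y.
Proof. intros Hx [H|H]; [left; apply ln_increasing; auto| subst; lra]. Qed.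

Lemma cell_bound x h s A : 0 < h -> Rabs x < 2 * s * h -> IZR A > 2 * s ->
  (- A <= Int_part (x / h) < A)%Z.
Proof.
  intros Hh Hx HA. apply Rabs_def2 in Hx. destruct Hx as [H1 H2].
  assert (x / h < 2 * s).
  { replace (2*s) with ((2*s*h) * / h) by (field; lra). unfold Rdiv.
    apply Rmult_lt_compat_r; [apply Rinv_0_lt_compat; lra| lra]. }
  assert (- (2 * s) < x / h).
  { replace (- (2*s)) with ((- (2*s*h)) * / h) by (field; lra). unfold Rdiv.
    apply Rmult_lt_compat_r; [apply Rinv_0_lt_compat; lra| lra]. }
  destruct (base_Int_part (x/h)) as [B1 B2].
  split.
  - assert (IZR (- A - 1) < IZR (Int_part (x/h))).
    { rewrite minus_IZR, opp_IZR. lra. }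
    apply lt_IZR in H3. lia.
  - apply lt_IZR. lra.
Qed.

Theorem corollary1 :
  exists c : R, 0 < c /\
  exists K : R,
    forall (n : nat) (s : R) (G : nat -> point),
      1 <= s ->
      K <= INR n / s ^ 2 ->
      is_drawing n G ->
      spanning_ratio_le n star_adj G s ->
      Rpower 2 (c * INR n / s ^ 2) <= edge_length_ratio n star_adj G.
Proof.
  exists (1/72). split; [lra|]. exists 144.
  intros n s G Hs HK Hdr Hsp.
  assert (Hs2 : 1 <= s^2) by nra.
  set (q := INR n / s^2) in *.
  assert (Hnq : INR n = q * s^2) by (unfold q; field; lra).
  assert (Hn2 : (2 <= n)%nat).
  { destruct (le_lt_dec 2 n) as [h|h]; auto. exfalso.
    assert (INR n <= 1) by (change 1 with (INR 1); apply le_INR; lia). nra. }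
  set (d := fun u => dist (G 0%nat) (G u)).
  assert (Hdpos : forall u, (1 <= u < n)%nat -> 0 < d u).
  { intros u Hu. apply dist_pos. apply Hdr; lia. }
  set (EL := edge_lengths n star_adj G).
  assert (HEL1 : forall e, In e EL -> exists v, (1 <= v < n)%nat /\ e = d v).
  { intros e He. unfold EL, edge_lengths in He. apply in_map_iff in He.
    destruct He as [[a b] [<- Hab]]. apply edges_in in Hab. simpl in Hab.
    destruct Hab as [-> Hb]. exists b. split; auto. }
  assert (HEL2 : forall v, (1 <= v < n)%nat -> In (d v) EL).
  { intros v Hv. unfold EL, edge_lengths. apply in_map_iff. exists (0%nat, v).
    split; auto. apply edges_leaf; auto. }
  set (mn := list_min EL). set (Mx := list_max EL).
  assert (HELne : EL <> []).
  { intro E. pose proof (HEL2 1%nat ltac:(lia)) as H. rewrite E in H. destruct H. }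
  destruct (HEL1 mn (list_min_in EL HELne)) as [w [Hw Hmnw]].
  assert (Hmnpos : 0 < mn) by (rewrite Hmnw; auto).
  assert (Hmnle : forall v, (1 <= v < n)%nat -> mn <= d v).
  { intros v Hv. apply list_min_le. auto. }
  assert (HMx : forall v, (1 <= v < n)%nat -> d v <= Mx).
  { intros v Hv. apply list_max_ge. auto. }
  change (edge_length_ratio n star_adj G) with (Mx / mn).
  assert (Hratio1 : forall x, mn <= x -> 1 <= x / mn).
  { intros x Hx. replace 1 with (mn * / mn) by (field; lra). unfold Rdiv.
    apply Rmult_le_compat_r; [left; apply Rinv_0_lt_compat; lra| lra]. }
  assert (HL1 : 1 <= Mx / mn).
  { apply Hratio1. rewrite Hmnw. apply HMx; auto. }
  assert (Hln2 : 0 < ln 2) by (pose proof ln_lt_2; lra).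
  set (T := ln (Mx / mn) / ln 2).
  assert (HT0 : 0 <= T).
  { unfold T, Rdiv. apply Rmult_le_pos; [|left; apply Rinv_0_lt_compat; lra].
    rewrite <- ln_1. apply ln_le'; lra. }
  set (J := Int_part T).
  set (A := up (2 * s)).
  destruct (archimed (2 * s)) as [HA1 HA2]. fold A in HA1, HA2.
  destruct (base_Int_part T) as [HJ1 HJ2]. fold J in HJ1, HJ2.
  assert (HJ0 : (0 <= J)%Z).
  { assert (IZR (-1) < IZR J) by lra. apply lt_IZR in H. lia. }
  assert (HA0 : (0 <= A)%Z).
  { apply le_IZR. lra. }
  pose (jf := fun u => Int_part (ln (d u / mn) / ln 2)).
  pose (Pf := fun u => Rpower 2 (IZR (jf u))).
  pose (hf := fun u => Pf u * mn / s).
  pose (cx := fun u => Int_part ((fst (G u) - fst (G 0%nat)) / hf u)).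
  pose (cy := fun u => Int_part ((snd (G u) - snd (G 0%nat)) / hf u)).
  pose (f := fun u => (Z.to_nat (jf u), (Z.to_nat (cx u + A), Z.to_nat (cy u + A)))).
  assert (Hleaf : forall u, (1 <= u < n)%nat ->
    (0 <= jf u <= J)%Z /\ Pf u * mn <= d u /\ d u < 2 * Pf u * mn /\ 0 < Pf u).
  { intros u Hu.
    set (t := ln (d u / mn) / ln 2).
    destruct (base_Int_part t) as [B1 B2].
    assert (Hdu1 : 1 <= d u / mn) by (apply Hratio1; auto).
    assert (Ht0 : 0 <= t).
    { unfold t, Rdiv. apply Rmult_le_pos; [|left; apply Rinv_0_lt_compat; lra].
      rewrite <- ln_1. apply ln_le'; lra. }
    assert (HtT : t <= T).
    { unfold t, T, Rdiv. apply Rmult_le_compat_r; [left; apply Rinv_0_lt_compat; lra|].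
      apply ln_le'; [lra|]. apply Rmult_le_compat_r; [left; apply Rinv_0_lt_compat; lra|].
      auto. }
    assert (Hj0 : (0 <= jf u)%Z).
    { assert (IZR (-1) < IZR (jf u)) by (unfold jf; fold t; lra). apply lt_IZR in H. lia. }
    assert (HjJ : (jf u <= J)%Z).
    { assert (IZR (jf u) < IZR (J + 1)) by (rewrite plus_IZR; unfold jf; fold t; lra).
      apply lt_IZR in H. lia. }
    assert (Hexp : exp (t * ln 2) = d u / mn).
    { replace (t * ln 2) with (ln (d u / mn)) by (unfold t; field; lra).
      apply exp_ln. lra. }
    assert (HP1 : Pf u <= d u / mn).
    { unfold Pf, Rpower. rewrite <- Hexp. apply exp_le.
      apply Rmult_le_compat_r; [lra|]. unfold jf; fold t; lra. }
    assert (HP2 : d u / mn < 2 * Pf u).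
    { unfold Pf, Rpower. rewrite <- Hexp.
      replace (2 * exp (IZR (jf u) * ln 2)) with (exp ((IZR (jf u) + 1) * ln 2)).
      - apply exp_increasing. apply Rmult_lt_compat_r; [lra|]. unfold jf; fold t; lra.
      - replace ((IZR (jf u) + 1) * ln 2) with (IZR (jf u) * ln 2 + ln 2) by ring.
        rewrite exp_plus, exp_ln by lra. ring. }
    assert (HPpos : 0 < Pf u) by (unfold Pf, Rpower; apply exp_pos).
    assert (Hdm : d u / mn * mn = d u) by (field; lra).
    split; [lia|]. split; [nra|]. split; [nra|]. auto. }
  assert (Hcell : forall u, (1 <= u < n)%nat ->
    (- A <= cx u < A)%Z /\ (- A <= cy u < A)%Z).
  { intros u Hu. destruct (Hleaf u Hu) as [_ [_ [H2 H3]]].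
    assert (Hh : 0 < hf u) by (unfold hf, Rdiv; apply Rmult_lt_0_compat; [nra| apply Rinv_0_lt_compat; lra]).
    assert (E : 2 * s * hf u = 2 * Pf u * mn) by (unfold hf; field; lra).
    split; apply (cell_bound _ _ s); auto; rewrite E.
    - eapply Rle_lt_trans; [apply fst_le_dist|]. rewrite dist_sym. exact H2.
    - eapply Rle_lt_trans; [apply snd_le_dist|]. rewrite dist_sym. exact H2. }
  assert (Hinj : forall u v, (1 <= u < n)%nat -> (1 <= v < n)%nat -> f u = f v -> u = v).
  { intros u v Hu Hv Hf. unfold f in Hf. injection Hf as E1 E2 E3.
    destruct (Hleaf u Hu) as [Ju [Pu1 [Pu2 Pu3]]].
    destruct (Hleaf v Hv) as [Jv [Pv1 [Pv2 Pv3]]].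
    destruct (Hcell u Hu) as [Cu1 Cu2]. destruct (Hcell v Hv) as [Cv1 Cv2].
    assert (Ej : jf u = jf v) by lia.
    assert (Ecx : cx u = cx v) by lia.
    assert (Ecy : cy u = cy v) by lia.
    assert (EP : Pf u = Pf v) by (unfold Pf; rewrite Ej; reflexivity).
    assert (Eh : hf u = hf v) by (unfold hf; rewrite EP; reflexivity).
    assert (Hh : 0 < hf u) by (unfold hf, Rdiv; apply Rmult_lt_0_compat; [nra| apply Rinv_0_lt_compat; lra]).
    unfold cx, cy in Ecx, Ecy. rewrite <- Eh in Ecx, Ecy.
    apply int_part_close in Ecx; auto. apply int_part_close in Ecy; auto.
    destruct (Nat.eq_dec u v) as [|Huv]; auto. exfalso.
    assert (Hd : dist (G u) (G v) < 2 * hf u).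
    { apply dist_lt2; auto.
      - replace (fst (G u) - fst (G v)) with (fst (G u) - fst (G 0%nat) - (fst (G v) - fst (G 0%nat))) by ring. auto.
      - replace (snd (G u) - snd (G v)) with (snd (G u) - snd (G 0%nat) - (snd (G v) - snd (G 0%nat))) by ring. auto. }
    pose proof (leaf_span n G s u v Hsp Hu Hv Huv) as Hspan. fold (d u) (d v) in Hspan.
    assert (E : s * (2 * hf u) = 2 * Pf u * mn) by (unfold hf; field; lra).
    assert (s * dist (G u) (G v) < s * (2 * hf u)) by (apply Rmult_lt_compat_l; lra).
    rewrite <- EP in Pv1. lra. }
  assert (Hcount : (length (seq 1 (n-1)) <= length (list_prod (seq 0 (S (Z.to_nat J)))
     (list_prod (seq 0 (Z.to_nat (2*A))) (seq 0 (Z.to_nat (2*A))))))%nat).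
  { rewrite <- (length_map f (seq 1 (n-1))). apply NoDup_incl_length.
    - apply NoDup_map_NoDup_ForallPairs; [|apply seq_NoDup]. intros u v Hu Hv.
      apply in_seq in Hu, Hv. apply Hinj; lia.
    - intros x Hx. apply in_map_iff in Hx. destruct Hx as [u [<- Hu]]. apply in_seq in Hu.
      destruct (Hleaf u ltac:(lia)) as [Ju _]. destruct (Hcell u ltac:(lia)) as [C1 C2].
      unfold f. rewrite !in_prod_iff, !in_seq. lia. }
  rewrite length_seq, !length_prod, !length_seq in Hcount.
  apply le_INR in Hcount.
  rewrite minus_INR in Hcount by lia.
  rewrite !mult_INR, (S_INR (Z.to_nat J)), (INR_IZR_INZ (Z.to_nat J)),
    (INR_IZR_INZ (Z.to_nat (2*A))), !Z2Nat.id in Hcount by lia.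
  rewrite mult_IZR in Hcount. change (INR 1) with 1 in Hcount.
  assert (HA3 : IZR A <= 3 * s) by lra.
  assert (HA4 : 0 <= IZR A) by (apply IZR_le; lia).
  assert (HJ3 : 0 <= IZR J) by (apply IZR_le; lia).
  assert (Hb : (IZR J + 1) * (2 * IZR A * (2 * IZR A)) <= (T + 1) * (36 * s^2)).
  { apply Rmult_le_compat; try nra. }
  assert (Hy : 1 / 72 * INR n / s ^ 2 <= T).
  { replace (1 / 72 * INR n / s ^ 2) with (q / 72) by (unfold q; field; lra).
    destruct (Rle_lt_dec (q/72) T) as [h|h]; auto. exfalso.
    assert ((T + 1) * (36 * s^2) < (q/72 + 1) * (36 * s^2)) by (apply Rmult_lt_compat_r; nra).
    assert (q * s^2 >= 144 * s^2) by nra.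
    lra. }
  unfold Rpower.
  replace (Mx / mn) with (exp (T * ln 2)).
  - apply exp_le. apply Rmult_le_compat_r; lra.
  - replace (T * ln 2) with (ln (Mx / mn)) by (unfold T; field; lra). apply exp_ln. lra.
Qed.
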